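(* Let $\kappa>-1$, $B=\operatorname{diag}(b_1,\dots,b_n)$, and consider on $T^*V(n,r)$ the flow $$\dot X=P-(1+2\kappa)XP^TX,\qquad \dot P=(1+2\kappa)PX^TP-B^2X+2BXX^TBX+X\Lambda,$$ with $\Lambda=X^TBX-2X^TBXX^TBX-P^TP$. Then along this flow the momentum mapping $\Phi=PX^T-XP^T$ satisfies $$\frac{d}{dt}\Phi=\tfrac12\left[B,(\mathbf I_n-2XX^T)B(\mathbf I_n-2XX^T)\right].$$ Moreover, on the invariant subvariety $\{(X,P):X^TP=P^TX=0\}$ one has $$\frac{d}{dt}\Big((\mathbf I_n-2XX^T)B(\mathbf I_n-2XX^T)\Big)=2\left[\Phi,(\mathbf I_n-2XX^T)B(\mathbf I_n-2XX^T)\right].$$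
   Context: $V(n,r)=\{X\in M_{n,r}(\mathbb R):X^TX=\mathbf I_r\}$, and $T^*V(n,r)$ is realized as the set of pairs $(X,P)$ of real $n\times r$ matrices with $X^TX=\mathbf I_r$, $X^TP+P^TX=0$. The flow is the Hamiltonian flow of $H=\frac12\operatorname{tr}(P^TP)-(\frac12+\kappa)\operatorname{tr}((X^TP)^2)+\frac12\operatorname{tr}(X^TB^2X)-\frac12\operatorname{tr}(X^TBXX^TBX)$ with respect to the canonical symplectic structure restricted from $\mathbb R^{2nr}$. $[\cdot,\cdot]$ is the matrix commutator. *)

(* Defs.v *)
From HB Require Import structures.
From mathcomp Require Import all_boot all_order all_algebra.
From mathcomp Require Import all_classical all_reals all_analysis.
Set Implicit Arguments. Unset Strict Implicit. Unset Printing Implicit Defensive.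
Import Order.TTheory GRing.Theory Num.Theory.
Local Open Scope ring_scope.

Definition mxcomm (R : pzRingType) (n : nat) (A B : 'M[R]_n) : 'M[R]_n :=
  A *m B - B *m A.

Definition mx_deriv_at (R : realType) (m n : nat)
    (F : R -> 'M[R]_(m, n)) (D : 'M[R]_(m, n)) (t : R) : Prop :=
  forall (i : 'I_m) (j : 'I_n), is_derive t (1 : R) (fun s => F s i j) (D i j).

Section Flow.
Variables (R : realType) (n r : nat).
Implicit Types (X P : 'M[R]_(n, r)) (b : 'rV[R]_n).

Definition Bmat b : 'M[R]_n := diag_mx b.

Definition Phi X P : 'M[R]_n := P *m X^T - X *m P^T.

Definition Lmat b X : 'M[R]_n :=
  (1%:M - 2 *: (X *m X^T)) *m Bmat b *m (1%:M - 2 *: (X *m X^T)).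

Definition Lambda b X P : 'M[R]_r :=
  X^T *m Bmat b *m X - 2 *: (X^T *m Bmat b *m X *m X^T *m Bmat b *m X)
  - P^T *m P.

Definition Xdot (kappa : R) X P : 'M[R]_(n, r) :=
  P - (1 + 2 * kappa) *: (X *m P^T *m X).

Definition Pdot (kappa : R) b X P : 'M[R]_(n, r) :=
  (1 + 2 * kappa) *: (P *m X^T *m P) - Bmat b *m Bmat b *m X
  + 2 *: (Bmat b *m X *m X^T *m Bmat b *m X) + X *m Lambda b X P.

End Flow.

(* Main.v *)
Require Import Defs.
From HB Require Import structures.
From mathcomp Require Import all_boot all_order all_algebra.
From mathcomp Require Import all_classical all_reals all_analysis.
From mathcomp Require Import ring.
Set Implicit Arguments. Unset Strict Implicit.
Import Order.TTheory GRing.Theory Num.Theory.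
Local Open Scope ring_scope.

Section L.
Variables (R : realType) (t : R).

Lemma mxd_eq m n (F : R -> 'M[R]_(m,n)) D D' :
  mx_deriv_at F D t -> D = D' -> mx_deriv_at F D' t.
Proof. by move=> H <-. Qed.

Lemma mxd_add m n (F G : R -> 'M[R]_(m,n)) D E :
  mx_deriv_at F D t -> mx_deriv_at G E t -> mx_deriv_at (fun s => F s + G s) (D + E) t.
Proof.
move=> HF HG i j; rewrite mxE.
have -> : (fun s => (F s + G s) i j) = (fun s => F s i j) + (fun s => G s i j).
  by apply/funext => s /=; rewrite mxE.
exact: is_deriveD.
Qed.

Lemma mxd_opp m n (F : R -> 'M[R]_(m,n)) D :
  mx_deriv_at F D t -> mx_deriv_at (fun s => - F s) (- D) t.
Proof.
move=> HF i j; rewrite mxE.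
have -> : (fun s => (- F s) i j) = - (fun s => F s i j).
  by apply/funext => s /=; rewrite mxE.
exact: is_deriveN.
Qed.

Lemma mxd_sub m n (F G : R -> 'M[R]_(m,n)) D E :
  mx_deriv_at F D t -> mx_deriv_at G E t -> mx_deriv_at (fun s => F s - G s) (D - E) t.
Proof. by move=> HF HG; apply: mxd_add => //; apply: mxd_opp. Qed.

Lemma mxd_scale m n (k : R) (F : R -> 'M[R]_(m,n)) D :
  mx_deriv_at F D t -> mx_deriv_at (fun s => k *: F s) (k *: D) t.
Proof.
move=> HF i j; rewrite mxE.
have -> : (fun s => (k *: F s) i j) = k \*: (fun s => F s i j).
  by apply/funext => s /=; rewrite mxE.
exact: is_deriveZ.
Qed.

Lemma mxd_cst m n (A : 'M[R]_(m,n)) : mx_deriv_at (fun _ => A) 0 t.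
Proof.
move=> i j; rewrite mxE.
exact: (is_derive_cst (A i j) t 1).
Qed.

Lemma mxd_tr m n (F : R -> 'M[R]_(m,n)) D :
  mx_deriv_at F D t -> mx_deriv_at (fun s => (F s)^T) D^T t.
Proof.
move=> HF i j; rewrite mxE.
have -> : (fun s => (F s)^T i j) = (fun s => F s j i).
  by apply/funext => s /=; rewrite mxE.
exact: HF.
Qed.

Lemma mxd_mul m n p (F : R -> 'M[R]_(m,n)) (G : R -> 'M[R]_(n,p)) D E :
  mx_deriv_at F D t -> mx_deriv_at G E t ->
  mx_deriv_at (fun s => F s *m G s) (D *m G t + F t *m E) t.
Proof.
move=> HF HG i j.
have H : forall k : 'I_n, is_derive t 1 (fun s => F s i k * G s k j)
    (D i k * G t k j + F t i k * E k j).
  move=> k; have H1 := is_deriveM (HF i k) (HG k j).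
  have E1 : F t i k *: E k j + G t k j *: D i k = D i k * G t k j + F t i k * E k j.
    by rewrite /GRing.scale /= addrC mulrC.
  rewrite -E1; exact: H1.
have := is_derive_sum H.
rewrite fct_sumE.
have -> : (D *m G t + F t *m E) i j =
   \sum_(k < n) (D i k * G t k j + F t i k * E k j).
  by rewrite !mxE big_split.
have -> : (fun s => (F s *m G s) i j) = (fun s => \sum_(k < n) F s i k * G s k j).
  by apply/funext => s; rewrite mxE.
by [].
Qed.

Lemma entD m n (A B : 'M[R]_(m,n)) i j : (A + B) i j = A i j + B i j.
Proof. by rewrite mxE. Qed.
Lemma entN m n (A : 'M[R]_(m,n)) i j : (- A) i j = - A i j.
Proof. by rewrite mxE. Qed.
Lemma entZ m n k (A : 'M[R]_(m,n)) i j : (k *: A) i j = k * A i j.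
Proof. by rewrite mxE. Qed.

Lemma trD m n (A C : 'M[R]_(m,n)) : (A + C)^T = A^T + C^T.
Proof. exact: linearD. Qed.
Lemma trN m n (A : 'M[R]_(m,n)) : (- A)^T = - A^T.
Proof. exact: linearN. Qed.
Lemma trZ m n k (A : 'M[R]_(m,n)) : (k *: A)^T = k *: A^T.
Proof. exact: linearZ. Qed.

Lemma phi_alg0 n r (B : 'M[R]_n) (k : R) (X P : 'M[R]_(n,r)) : B^T = B ->
  let Xd := P - (1 + 2 * k) *: (X *m P^T *m X) in
  let Pd := (1 + 2 * k) *: (P *m X^T *m P) - B *m B *m X
  + 2 *: (B *m X *m X^T *m B *m X) + X *m (X^T *m B *m X - 2 *: (X^T *m B *m X *m X^T *m B *m X)
  - P^T *m P) in
  Pd *m X^T + P *m Xd^T - (Xd *m P^T + X *m Pd^T)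
  = 2^-1 *: (B *m ((1%:M - 2 *: (X *m X^T)) *m B *m (1%:M - 2 *: (X *m X^T)))
      - (1%:M - 2 *: (X *m X^T)) *m B *m (1%:M - 2 *: (X *m X^T)) *m B).
Proof.
move=> hB Xd Pd; rewrite /Xd /Pd.
rewrite !(trD, trN, trZ, trmx_mul, trmxK, hB).
rewrite !(mulmxDl, mulmxDr, mulmxBl, mulmxBr, mulmxN, mulNmx, mul1mx, mulmx1).
rewrite -!(scalemxAl, scalemxAr) !mulmxA.
apply/matrixP => i j; rewrite !(entD, entN, entZ).

by field.
Qed.

Lemma L_alg n r (B : 'M[R]_n) (X P : 'M[R]_(n,r)) :
  X^T *m X = 1%:M -> P^T *m X = 0 -> X^T *m P = 0 ->
  ((0 - 2 *: (P *m X^T + X *m P^T)) *m B + (1%:M - 2 *: (X *m X^T)) *m 0)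
     *m (1%:M - 2 *: (X *m X^T))
  + (1%:M - 2 *: (X *m X^T)) *m B *m (0 - 2 *: (P *m X^T + X *m P^T))
  = 2 *: mxcomm (P *m X^T - X *m P^T)
       ((1%:M - 2 *: (X *m X^T)) *m B *m (1%:M - 2 *: (X *m X^T))).
Proof.
move=> hXX hPX hXP.
set S := 1%:M - 2 *: (X *m X^T).
set F := P *m X^T - X *m P^T.
have h1 : F *m S = - (P *m X^T + X *m P^T).
  rewrite /F /S mulmxBr mulmx1 -scalemxAr mulmxBl !mulmxA.
  rewrite -[P *m X^T *m X]mulmxA -[X *m P^T *m X]mulmxA hXX hPX mulmx1 mulmx0 mul0mx.
  apply/matrixP => i j; rewrite !(entD, entN, entZ, mxE); ring.
have h2 : S *m F = P *m X^T + X *m P^T.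
  rewrite /F /S mulmxBl mul1mx -scalemxAl !mulmxBr !mulmxA.
  rewrite -[X *m X^T *m P]mulmxA -[X *m X^T *m X]mulmxA hXX hXP mulmx1 mulmx0 mul0mx.
  apply/matrixP => i j; rewrite !(entD, entN, entZ, mxE); ring.
have e1 : 0 - 2 *: (P *m X^T + X *m P^T) = 2 *: (F *m S).
  by rewrite h1 sub0r scalerN.
have e2 : 0 - 2 *: (P *m X^T + X *m P^T) = (- 2) *: (S *m F).
  by rewrite h2 sub0r scaleNr.
rewrite mulmx0 addr0 {1}e1 e2 /mxcomm -!scalemxAl -!scalemxAr !mulmxA.
apply/matrixP => i j; rewrite !(entD, entN, entZ); ring.
Qed.

End L.

Theorem lemma8 (R : realType) (n r : nat) (kappa : R) (b : 'rV[R]_n)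
    (a c : R) (X P : R -> 'M[R]_(n, r)) :
  -1 < kappa ->
  (* the curve lies in T^*V(n,r) *)
  (forall t, a < t < c -> (X t)^T *m X t = 1%:M) ->
  (forall t, a < t < c -> (X t)^T *m P t + (P t)^T *m X t = 0) ->
  (* the curve is an integral curve of the flow *)
  (forall t, a < t < c -> mx_deriv_at X (Xdot kappa (X t) (P t)) t) ->
  (forall t, a < t < c -> mx_deriv_at P (Pdot kappa b (X t) (P t)) t) ->
  (forall t, a < t < c ->
     mx_deriv_at (fun s => Phi (X s) (P s))
       (2^-1 *: mxcomm (Bmat b) (Lmat b (X t))) t)
  /\
  ((forall t, a < t < c -> (X t)^T *m P t = 0 /\ (P t)^T *m X t = 0) ->
   forall t, a < t < c ->
     mx_deriv_at (fun s => Lmat b (X s))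
       (2 *: mxcomm (Phi (X t) (P t)) (Lmat b (X t))) t).
Proof.
move=> _ hXX _ HX HP; split.
  move=> t ht.
  have H := mxd_sub (mxd_mul (HP t ht) (mxd_tr (HX t ht)))
                    (mxd_mul (HX t ht) (mxd_tr (HP t ht))).
  apply: (mxd_eq H).
  exact: (phi_alg0 kappa (X t) (P t) (tr_diag_mx b)).
move=> h0 t ht.
have [hXP hPX] := h0 t ht.
have eXd : Xdot kappa (X t) (P t) = P t.
  by rewrite /Xdot -mulmxA hPX mulmx0 scaler0 subr0.
have HX' := HX t ht; rewrite eXd in HX'.
have HS := mxd_sub ((@mxd_cst R t n n 1%:M))
   (mxd_scale 2 (mxd_mul HX' (mxd_tr HX'))).
have H := mxd_mul (mxd_mul HS ((@mxd_cst R t n n (Bmat b)))) HS.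
apply: (mxd_eq H).
exact: (L_alg (Bmat b) (hXX t ht) hPX hXP).
Qed.
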